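(* For every $\epsilon>0$, no impartial selection mechanism (deterministic or randomized, and possibly returning no winner with positive probability) has approximation ratio better than $2-\epsilon$ against all uniform priors; that is, for every such mechanism $f$ there is a uniform prior $\mathbf{P}$ with $\frac{\mathbb{E}_{\mathbf{x}\sim\mathbf{P}}[\Delta(\mathbf{x})]}{\mathbb{E}_{\mathbf{x}\sim\mathbf{P}}[d_{f(\mathbf{x})}(\mathbf{x})]}>2-\epsilon$. (In fact, two-node uniform instances with sufficiently small popularity $p$ suffice.)
   Context: A nomination profile on a finite agent set $N$ is a directed graph $\mathbf{x}$ on $N$ without self-loops; $d_j(\mathbf{x})$ is the in-degree of $j$ and $\Delta(\mathbf{x})=\max_j d_j(\mathbf{x})$. A (randomized) selection mechanism maps each profile to a probability distribution over $N\cup\{\text{no winner}\}$; it is impartial if for every agent $i$, every profile $\mathbf{x}$, and every alternative set $x_i'$ of outgoing edges of $i$, the probability that $i$ is selected is the same at $\mathbf{x}$ and at the profile obtained by replacing $i$'s outgoing edges with $x_i'$. The in-degree of ''no winner'' is taken as $0$, and $\mathbb{E}[d_{f(\mathbf{x})}(\mathbf{x})]$ is over both the profile and the mechanism's randomness. Uniform prior with popularity $p$: each directed edge $(i,j)$, $i\neq j$, is present independently with probability $p$. *)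

(* Defs.v *)
From mathcomp Require Import all_boot all_order all_algebra.
From mathcomp Require Import reals.
Set Implicit Arguments. Unset Strict Implicit. Unset Printing Implicit Defensive.
Import Order.TTheory GRing.Theory Num.Theory.
Local Open Scope ring_scope.

(* A profile on the agent set N = 'I_n : x i is the set of agents nominated
   by i (outgoing edges of i). *)
Definition profile (n : nat) := {ffun 'I_n -> {set 'I_n}}.

Definition valid_profile n (x : profile n) : bool := [forall i, i \notin x i].

Definition indeg n (x : profile n) (j : 'I_n) : nat := #|[set i | j \in x i]|.

(* Maximum in-degree Delta(x) (0 if n = 0). *)
Definition maxdeg n (x : profile n) : nat := \max_(j : 'I_n) indeg x j.

Definition replace_out n (x : profile n) (i : 'I_n) (S : {set 'I_n}) : profile n :=
  [ffun k => if k == i then S else x k].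

(* A randomized selection mechanism on N = 'I_n: for each profile, a
   distribution over N ∪ {no winner}, encoded as option 'I_n (None = no winner). *)
Definition mechanism (R : realType) (n : nat) := profile n -> option 'I_n -> R.

Definition is_lottery_mech (R : realType) n (f : mechanism R n) : Prop :=
  forall x : profile n, valid_profile x ->
    (forall o, 0 <= f x o) /\ \sum_(o : option 'I_n) f x o = 1.

Definition impartial (R : realType) n (f : mechanism R n) : Prop :=
  forall (x : profile n) (i : 'I_n) (S : {set 'I_n}),
    valid_profile x -> i \notin S ->
    f (replace_out x i S) (Some i) = f x (Some i).

(* Uniform prior with popularity p: each edge (i,j), i<>j, present independently
   with probability p. *)
Definition uprob (R : realType) n (p : R) (x : profile n) : R :=
  \prod_(i : 'I_n) \prod_(j : 'I_n | j != i) (if j \in x i then p else 1 - p).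

Definition E_maxdeg (R : realType) n (p : R) : R :=
  \sum_(x : profile n | valid_profile x) uprob p x * (maxdeg x)%:R.

(* E[d_{f(x)}(x)], "no winner" having in-degree 0. *)
Definition E_seldeg (R : realType) n (p : R) (f : mechanism R n) : R :=
  \sum_(x : profile n | valid_profile x)
     uprob p x * \sum_(j : 'I_n) f x (Some j) * (indeg x j)%:R.

(* Main.v *)
Require Import Defs.
From mathcomp Require Import all_boot all_order all_algebra.
From mathcomp Require Import reals.
From mathcomp Require Import lra ring.
Import Order.TTheory GRing.Theory Num.Theory.
Local Open Scope ring_scope.

Definition o0 : 'I_2 := ord0.
Definition o1 : 'I_2 := ord_max.

Definition mk (b0 b1 : bool) : profile 2 :=
  [ffun k => if k == o0 then (if b0 then [set o1] else set0)
             else (if b1 then [set o0] else set0)].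

Definition code (x : profile 2) := (o1 \in x o0, o0 \in x o1).

Lemma I2_cases (k : 'I_2) : k = o0 \/ k = o1.
Proof. case: k => [[|[|k]] Hk]; [left|right|]; try exact: val_inj. by []. Qed.

Lemma valid_mk b0 b1 : valid_profile (mk b0 b1).
Proof.
apply/forallP => i; rewrite ffunE.
case: (I2_cases i) => ->; rewrite ?eqxx /=; case: ifP => _;
  rewrite ?inE //.
Qed.

Lemma code_mk b0 b1 : code (mk b0 b1) = (b0, b1).
Proof. rewrite /code !ffunE /=; case: b0; case: b1; rewrite ?inE //. Qed.

Lemma mk_code x : valid_profile x -> x = mk (code x).1 (code x).2.
Proof.
move/forallP => v; apply/ffunP => k; rewrite ffunE; apply/setP => j.
have v0 := v o0; have v1 := v o1.
case: (I2_cases k) => ->; case: (I2_cases j) => ->; rewrite /= ?eqxx /=.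
- by case: ifP => _; rewrite ?inE // (negbTE v0).
- by case: ifP => H; rewrite ?inE ?eqxx ?H.
- by case: ifP => H; rewrite ?inE ?eqxx ?H.
- by case: ifP => _; rewrite ?inE // (negbTE v1).
Qed.

Lemma sum_valid (R : realType) (F : profile 2 -> R) :
  \sum_(x : profile 2 | valid_profile x) F x =
  F (mk true true) + F (mk true false) + (F (mk false true) + F (mk false false)).
Proof.
rewrite (partition_big code predT) //=.
rewrite (eq_bigr (fun b => F (mk b.1 b.2))); last first.
  move=> b _; rewrite (big_pred1 (mk b.1 b.2)) // => x /=.
  apply/idP/eqP.
  - by move/andP=> [v /eqP c]; rewrite {1}(mk_code x v) c.
  - by move->; rewrite valid_mk code_mk; apply/eqP; case: b.
rewrite -(pair_big predT predT (fun a b => F (mk a b))) /=.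
by rewrite !big_bool /= addrA.
Qed.

Lemma uprob2 (R : realType) (p : R) x :
  uprob p x = (if o1 \in x o0 then p else 1 - p) * (if o0 \in x o1 then p else 1 - p).
Proof.
rewrite /uprob big_ord_recl big_ord1.
rewrite !(big_mkcond (fun j : 'I_2 => j != _)) !big_ord_recl !big_ord0 /=.
have -> : lift ord0 ord0 = o1 by apply: val_inj.
by rewrite !mul1r !mulr1.
Qed.

Lemma indeg_mk0 b0 b1 : indeg (mk b0 b1) o0 = b1.
Proof.
rewrite /indeg (_ : [set i | o0 \in mk b0 b1 i] = if b1 then [set o1] else set0).
  by case: b1; rewrite ?cards1 ?cards0.
apply/setP => i; rewrite !inE !ffunE.
case: (I2_cases i) => -> /=; case: b0; case: b1; rewrite ?inE //.
Qed.

Lemma indeg_mk1 b0 b1 : indeg (mk b0 b1) o1 = b0.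
Proof.
rewrite /indeg (_ : [set i | o1 \in mk b0 b1 i] = if b0 then [set o0] else set0).
  by case: b0; rewrite ?cards1 ?cards0.
apply/setP => i; rewrite !inE !ffunE.
case: (I2_cases i) => -> /=; case: b0; case: b1; rewrite ?inE //.
Qed.

Lemma maxdeg_mk b0 b1 : maxdeg (mk b0 b1) = maxn b0 b1.
Proof.
rewrite /maxdeg big_ord_recl big_ord1.
have -> : lift ord0 ord0 = o1 by apply: val_inj.
by rewrite -/o0 indeg_mk0 indeg_mk1 maxnC.
Qed.

Lemma uprob_mk (R : realType) (p : R) b0 b1 :
  uprob p (mk b0 b1) = (if b0 then p else 1 - p) * (if b1 then p else 1 - p).
Proof. by rewrite uprob2 !ffunE /=; case: b0; case: b1; rewrite ?inE. Qed.


Lemma repl0 b0 b0' b1 : replace_out (mk b0 b1) o0 (if b0' then [set o1] else set0) = mk b0' b1.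
Proof.
apply/ffunP => k; rewrite !ffunE; case: (I2_cases k) => -> //.
Qed.

Lemma repl1 b0 b1 b1' : replace_out (mk b0 b1) o1 (if b1' then [set o0] else set0) = mk b0 b1'.
Proof.
apply/ffunP => k; rewrite !ffunE; case: (I2_cases k) => -> //.
Qed.

Theorem mainTheorem19 (R : realType) (eps : R) (heps : 0 < eps)
    (f : forall n : nat, mechanism R n)
    (hlot : forall n, is_lottery_mech (f n))
    (himp : forall n, impartial (f n)) :
  exists (n : nat) (p : R), 0 <= p <= 1 /\
    (2 - eps) * E_seldeg p (f n) < E_maxdeg n p.
Proof.
set p := eps / (eps + 2).
have he2 : 0 < eps + 2 by rewrite addr_gt0.
have hp0 : 0 < p by rewrite divr_gt0.
have hpe : p * (eps + 2) = eps by rewrite /p divfK // gt_eqF.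
have hp1 : p < 1 by nra.
have hpeps : p < eps by nra.
exists 2%N, p; split; first by apply/andP; split; [exact: ltW | exact: ltW].
set g := f 2%N.
have imp0 : forall b0 b0' b1, g (mk b0' b1) (Some o0) = g (mk b0 b1) (Some o0).
  move=> b0 b0' b1; rewrite -(repl0 b0 b0' b1); apply: himp; first exact: valid_mk.
  by case: b0'; rewrite ?inE.
have imp1 : forall b0 b1 b1', g (mk b0 b1') (Some o1) = g (mk b0 b1) (Some o1).
  move=> b0 b1 b1'; rewrite -(repl1 b0 b1 b1'); apply: himp; first exact: valid_mk.
  by case: b1'; rewrite ?inE.
have [hpos hsum] := hlot 2%N (mk true true) (valid_mk true true).
set u := g (mk true true) (Some o0).
set v := g (mk true true) (Some o1).
have hu : 0 <= u := hpos _.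
have hv : 0 <= v := hpos _.
have huv : u + v <= 1.
  rewrite -hsum (bigD1 (Some o0)) //= (bigD1 (Some o1)) //= addrA lerDl.
  by apply: sumr_ge0 => o _; exact: hpos.
have sel : forall b0 b1, \sum_(j : 'I_2) g (mk b0 b1) (Some j) * (indeg (mk b0 b1) j)%:R
   = g (mk b0 b1) (Some o0) * (b1 : nat)%:R + g (mk b0 b1) (Some o1) * (b0 : nat)%:R.
  move=> b0 b1; rewrite big_ord_recl big_ord1.
  have -> : lift ord0 ord0 = o1 by apply: val_inj.
  by rewrite -/o0 indeg_mk0 indeg_mk1.
have ES : E_seldeg p g = p * (u + v).
  rewrite /E_seldeg sum_valid !sel !uprob_mk /=.
  rewrite (imp0 true false true) (imp1 true true false).
  rewrite -/u -/v.
  ring.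
have EM : E_maxdeg 2 p = 2 * p - p * p.
  rewrite /E_maxdeg sum_valid !maxdeg_mk !uprob_mk /=.
  rewrite (_ : maxn 1 1 = 1%N) // (_ : maxn 1 0 = 1%N) // (_ : maxn 0 1 = 1%N) // (_ : maxn 0 0 = 0%N) //.
  ring.
rewrite ES EM.
have hw : 0 <= p * (u + v) <= p.
  apply/andP; split; nra.
case: (lerP (2 - eps) 0) => h2; nra.
Qed.
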